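(* Consider the asynchronous $(n,k)$ game on the complete graph with agent set $[n]$ consisting of $n_r$ rejectors, $n_c$ consentors and at least two majority followers, with threshold $n_c<k\le n-n_r$. Let $T=\inf\{t\ge0:\ x_i(t)=x_i(s)\text{ for all } i\in[n]\text{ and all } s\ge t\}$. Then on the event that a decision is never made in finite time (i.e. $\sum_{i\in[n]}x_i(t)<k$ for all $t\ge0$), all majority followers hold opinion $0$ at time $T$.
   Context: Each agent $i\in[n]$ holds an opinion $x_i(t)\in\{0,1\}$ at time $t=0,1,2,\dots$. The social graph is complete: every agent's social neighbors are all the other $n-1$ agents. In the $(n,k)$ game a decision is made at time $t$ if $\sum_{i\in[n]}x_i(t)\ge k$. The game is asynchronous: at each time step a single agent, chosen uniformly at random from $[n]$ (independently of the past), updates its opinion, and all other opinions stay the same. A rejector holds opinion $0$ at all times; a consentor holds opinion $1$ at all times. A majority follower has initial opinion distributed as Bernoulli$(1/2)$ (independently across agents), and when it updates it adopts the majority opinion among its social neighbors (the other $n-1$ agents). *)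

(* Defs.v *)
From HB Require Import structures.
From mathcomp Require Import all_boot all_order all_algebra.
From mathcomp Require Import all_classical all_reals all_analysis.
Set Implicit Arguments. Unset Strict Implicit. Unset Printing Implicit Defensive.

Inductive role := Rejector | Consentor | Follower.
Definition is_rej r := if r is Rejector then true else false.
Definition is_con r := if r is Consentor then true else false.
Definition is_fol r := if r is Follower then true else false.

Definition ones n (x : 'I_n -> bool) : nat := #|[pred j | x j]|.

Definition update n (ro : 'I_n -> role) (x : 'I_n -> bool) (i : 'I_n) : bool :=
  match ro i with
  | Rejector => false
  | Consentor => true
  | Follower =>
      let o1 := #|[pred j | (j != i) && x j]| in
      let o0 := #|[pred j | (j != i) && ~~ x j]| in
      if o0 < o1 then true else if o1 < o0 then false else x i
  end.

Definition step n (ro : 'I_n -> role) (x : 'I_n -> bool) (i : 'I_n) : 'I_n -> bool :=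
  fun j => if j == i then update ro x i else x j.

(* Trajectory x(t) given initial configuration x0 and the sequence u of
   updating agents (u t updates between time t and t+1). *)
Fixpoint traj n (ro : 'I_n -> role) (x0 : 'I_n -> bool) (u : nat -> 'I_n) (t : nat)
  : 'I_n -> bool :=
  match t with
  | 0 => x0
  | t'.+1 => step ro (traj ro x0 u t') (u t')
  end.

Definition init n (ro : 'I_n -> role) (b : 'I_n -> bool) : 'I_n -> bool :=
  fun i => match ro i with Rejector => false | Consentor => true | Follower => b i end.

Definition settled n (x : nat -> 'I_n -> bool) (t : nat) : Prop :=
  forall s, t <= s -> forall i, x s i = x t i.

Definition followers_zero_at_T n (ro : 'I_n -> role) (x : nat -> 'I_n -> bool) : Prop :=
  exists T, [/\ settled x T, (forall t, settled x t -> T <= t)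
             & forall i, is_fol (ro i) -> x T i = false].

(* Cylinder event: followers' initial Bernoulli values equal b and the first
   size s updating agents are s. *)
Definition cyl (Om : Type) n (ro : 'I_n -> role) (B : 'I_n -> Om -> bool)
  (U : nat -> Om -> 'I_n) (b : 'I_n -> bool) (s : seq 'I_n) : set Om :=
  [set w | (forall i, is_fol (ro i) -> B i w = b i)
           /\ [seq U t w | t <- iota 0 (size s)] = s].

(* Main.v *)
Require Import Defs.
From HB Require Import structures.
From mathcomp Require Import all_boot all_order all_algebra.
From mathcomp Require Import all_classical all_reals all_analysis.
From mathcomp Require Import zify ring.
Import Order.TTheory GRing.Theory Num.Theory.
Set Implicit Arguments. Unset Strict Implicit. Unset Printing Implicit Defensive.
Section Det.
Variables (n : nat) (ro : 'I_n -> role).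
Implicit Types (x : 'I_n -> bool) (i j : 'I_n).

Definition good (x : 'I_n -> bool) :=
  forall i, (is_rej (ro i) -> x i = false) /\ (is_con (ro i) -> x i = true).

Lemma good_init b : good (init ro b).
Proof. by move=> i; rewrite /init; case: (ro i). Qed.

Lemma good_step x i : good x -> good (step ro x i).
Proof.
move=> gx j; rewrite /step; case: eqP => [->|_]; last exact: gx.
by rewrite /update; case: (ro i).
Qed.

Lemma ones_split x i : ones x = #|[pred j | (j != i) && x j]| + x i.
Proof.
by rewrite /ones (cardD1 i) addnC inE.
Qed.

Lemma others x i :
  #|[pred j | (j != i) && x j]| + #|[pred j | (j != i) && ~~ x j]| = n.-1.
Proof.
rewrite -[n in n.-1]card_ord -(cardC1 i) -(cardID [pred j | x j] (predC1 i)).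
by congr (_ + _); apply: eq_card => j; rewrite !inE; case: (j != i); case: (x j).
Qed.

Lemma key x i : good x ->
  let Y := ones x in let Y' := ones (step ro x i) in
  [/\ Y' = Y -> step ro x i =1 x, (Y < Y' -> n < 2*Y')%N, (Y' < Y -> 2*Y' < n)%N,
      (n < 2*Y -> Y <= Y')%N & (2*Y < n -> Y' <= Y)%N].
Proof.
move=> gx /=.
have n0 : (0 < n)%N by case: n i {x gx} => [[]|].
have e1 := ones_split x i.
have e2 := ones_split (step ro x i) i.
have eo : #|[pred j | (j != i) && step ro x i j]| = #|[pred j | (j != i) && x j]|.
  by apply: eq_card => j; rewrite !inE /step; case: eqP.
rewrite eo in e2.
have hs : step ro x i i = update ro x i by rewrite /step eqxx.
rewrite hs in e2.
have ho := others x i.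
set o1 := #|[pred j | (j != i) && x j]| in e1 e2 ho.
set o0 := #|[pred j | (j != i) && ~~ x j]| in ho.
have rule : (update ro x i && ~~ x i -> o0 < o1)%N /\ (~~ update ro x i && x i -> o1 < o0)%N.
  rewrite /update; case hr: (ro i).
  - by have [+ _] := gx i; rewrite hr => ->.
  - by have [_ +] := gx i; rewrite hr => ->.
  - rewrite -/o1 -/o0; case: ifP => h1; [|case: ifP => h2]; move: h1; case: (x i) => /= h1 //; lia.
have stepid : update ro x i = x i -> step ro x i =1 x.
  by move=> h j; rewrite /step; case: eqP => // ->.
move: rule stepid e1 e2; case: (update ro x i); case: (x i) => /= -[r1 r2] sid e1 e2.
- by split=> *; [apply: sid|lia..].
- have := r1 isT; split=> *; [lia|lia|lia|lia|lia].
- have := r2 isT; split=> *; [lia|lia|lia|lia|lia].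
- by split=> *; [apply: sid|lia..].
Qed.

Lemma fixed_zero x k : good x ->
  (forall i, is_fol (ro i) -> update ro x i = x i) ->
  (ones x < k)%N -> (k <= n - #|[pred i | is_rej (ro i)]|)%N ->
  forall i, is_fol (ro i) -> x i = false.
Proof.
move=> gx fx hk hkn i fi; apply/negbTE/negP => xi.
have n0 : (0 < n)%N by case: n i {x gx fx xi hk hkn fi} => [[]|].
have A : forall j, is_fol (ro j) -> x j.
  move=> j fj; apply/idPn => xj.
  have hi := fx i fi; have hj := fx j fj.
  move: hi hj; rewrite /update.
  case hri: (ro i) fi => // _; case hrj: (ro j) fj => // _.
  have ei := ones_split x i; have ej := ones_split x j.
  have oi := others x i; have oj := others x j.
  rewrite (negbTE xj) in ej *; rewrite xi in ei *.
  set a1 := #|[pred l | (l != i) && x l]| in ei oi *.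
  set a0 := #|[pred l | (l != i) && ~~ x l]| in oi *.
  set b1 := #|[pred l | (l != j) && x l]| in ej oj *.
  set b0 := #|[pred l | (l != j) && ~~ x l]| in oj *.
  case: (ltngtP a0 a1) => h1; case: (ltngtP b0 b1) => h2 //= _ _; lia.
have : (n - #|[pred i | is_rej (ro i)]| <= ones x)%N.
  have hc := cardC [pred i | is_rej (ro i)]; rewrite card_ord in hc.
  apply: (@leq_trans #|[predC [pred i | is_rej (ro i)]]|); first by rewrite -[X in X - _]hc addKn.
  rewrite /ones; apply: subset_leq_card.
  have : [predC [pred i | is_rej (ro i)]] \subset [pred j | x j]; last by [].
  apply/fintype.subsetP => j; rewrite !inE => rj.
  have [_ hcj] := gx j.
  move: rj hcj (A j); case: (ro j) => //= _ h1 h2; [by rewrite h1 | exact: h2].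
lia.
Qed.

End Det.

Lemma mono_le (f : nat -> nat) t0 :
  (forall s, t0 <= s -> f s <= f s.+1)%N -> forall s, (t0 <= s -> f t0 <= f s)%N.
Proof.
move=> hm; elim=> [|s IH] hs; first by have -> : t0 = 0%N by lia.
case: (leqP t0 s) => h; first exact: leq_trans (IH h) (hm s h).
by have -> : t0 = s.+1 by lia.
Qed.

Lemma mono_settle (f : nat -> nat) M t0 :
  (forall s, t0 <= s -> f s <= f s.+1)%N -> (forall s, f s <= M)%N ->
  exists T, forall s, (T <= s)%N -> f s = f T.
Proof.
move=> hm hM; move: {2}(M - f t0).+1 (ltnSn (M - f t0)) => k.
elim: k t0 hm => [//|k IH] t0 hm hk.
case: (pselect (forall s, (t0 <= s)%N -> f s = f t0)) => [h|]; first by exists t0.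
move/existsNP => [s /not_implyP [hs hne]].
have := mono_le hm hs => hle.
apply: (IH s).
  by move=> s' hs'; apply: hm; lia.
have := hM s; lia.
Qed.

Lemma ex_min (Q : nat -> Prop) m : Q m -> exists T, Q T /\ forall t, Q t -> (T <= t)%N.
Proof.
move=> qm.
have ex : exists t, `[< Q t >] by exists m; apply/asboolP.
case: (ex_minnP ex) => T /asboolP qT hmin.
by exists T; split => // t /asboolP /hmin.
Qed.

Section Traj.
Variables (n : nat) (ro : 'I_n -> role) (b : 'I_n -> bool) (u : nat -> 'I_n).
Let x t := traj ro (init ro b) u t.
Let Y t := ones (x t).

Lemma good_traj t : good ro (x t).
Proof. elim: t => [|t IH]; [exact: good_init | exact: good_step]. Qed.

Lemma Y_le t : (Y t <= n)%N.
Proof. by rewrite /Y /ones -[X in (_ <= X)%N]card_ord max_card. Qed.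

Lemma settle_of_Y T : (forall s, T <= s -> Y s = Y T)%N -> settled x T.
Proof.
move=> hY; elim=> [|s IH] hs i; first by have -> : T = 0%N by lia.
case: (leqP T s) => h; last by have -> : T = s.+1 by lia.
have [k1 _ _ _ _] := key (u s) (good_traj s).
rewrite -(IH h i); apply: k1.
by change (Y s.+1 = Y s); rewrite (hY s.+1 (leqW h)) (hY s h).
Qed.

Lemma traj_settles : exists T, settled x T.
Proof.
case: (pselect (forall t, Y t.+1 = Y t)) => [h|].
  exists 0%N; apply: settle_of_Y => s _; elim: s => // s IH; by rewrite h.
move/existsNP => [t0 ht0].
have [k1 k2 k3 k4 k5] := key (u t0) (good_traj t0).
case: (ltngtP (Y t0) (Y t0.+1)) => h; last by case: ht0.
- have inv : forall s, (t0.+1 <= s -> n < 2 * Y s)%N.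
    elim=> [//|s IH] hs.
    case: (leqP t0.+1 s) => hs'.
      have [_ _ _ l4 _] := key (u s) (good_traj s).
      have := IH hs'; have := l4 (IH hs'); rewrite -/(x s.+1) -/(Y s.+1) -/(Y s); lia.
    have -> : s = t0 by lia.
    exact: k2.
  have hm : forall s, (t0.+1 <= s -> Y s <= Y s.+1)%N.
    move=> s hs; have [_ _ _ l4 _] := key (u s) (good_traj s); exact: l4 (inv s hs).
  have [T hT] := @mono_settle Y n t0.+1 hm Y_le.
  by exists T; apply: settle_of_Y.
- have inv : forall s, (t0.+1 <= s -> 2 * Y s < n)%N.
    elim=> [//|s IH] hs.
    case: (leqP t0.+1 s) => hs'.
      have [_ _ _ _ l5] := key (u s) (good_traj s).
      have := IH hs'; have := l5 (IH hs'); rewrite -/(x s.+1) -/(Y s.+1) -/(Y s); lia.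
    have -> : s = t0 by lia.
    exact: k3.
  have hm : forall s, (t0.+1 <= s -> (fun s => n - Y s) s <= (fun s => n - Y s) s.+1)%N.
    move=> s hs; have [_ _ _ _ l5] := key (u s) (good_traj s); have := l5 (inv s hs).
    rewrite -/(x s.+1) -/(Y s.+1) -/(Y s) /=; lia.
  have [T hT] := @mono_settle (fun s => n - Y s)%N n t0.+1 hm (fun s => leq_subr _ _).
  exists T; apply: settle_of_Y => s hs; have := hT s hs; have := Y_le s; have := Y_le T; lia.
Qed.

Lemma det_main k :
  (forall t, ones (x t) < k)%N ->
  (k <= n - #|[pred i | is_rej (ro i)]|)%N ->
  (forall i t, is_fol (ro i) -> exists s, (t <= s)%N /\ u s = i) ->
  followers_zero_at_T ro x.
Proof.
move=> hk hkn hinf.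
have [T0 hT0] := traj_settles.
have [T [hT hmin]] := ex_min hT0.
exists T; split => //.
apply: (@fixed_zero _ ro (x T) k (good_traj T)) => // j fj.
have [s [hs us]] := hinf j T fj.
have e1 : x s = x T by apply/funext => i; apply: hT.
have e2 : x s.+1 j = x T j by apply: hT; lia.
by rewrite -e2 /x /= -/(x s) us /step eqxx e1.
Qed.
End Traj.

Local Open Scope ring_scope.
Local Open Scope classical_set_scope.

Fixpoint AA n (j : 'I_n) (t N : nat) : seq (seq 'I_n) :=
  if N is N'.+1 then
    [seq rcons s a | s <- AA j t N', a <- if (N' < t)%N then enum 'I_n else enum (predC1 j)]
  else [:: [::]].

Lemma size_AA_lt n (j : 'I_n) t N : (N <= t)%N -> size (AA j t N) = (n ^ N)%N.
Proof.
elim: N => [//|N IH] h /=.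
by rewrite size_allpairs IH ?(ltnW h) // h size_enum_ord expnS mulnC.
Qed.

Lemma size_AA n (j : 'I_n) t L : size (AA j t (t + L)) = (n ^ t * n.-1 ^ L)%N.
Proof.
elim: L => [|L IH]; first by rewrite addn0 size_AA_lt // expn0 muln1.
rewrite addnS /= size_allpairs IH ltnNge leq_addr /= -cardE cardC1 card_ord.
by rewrite expnSr mulnA.
Qed.

Lemma AA_size n (j : 'I_n) t N s : s \in AA j t N -> size s = N.
Proof.
elim: N s => [|N IH] s /=; first by rewrite inE => /eqP ->.
by move=> /allpairsP [[s1 a] [/= h1 _ ->]]; rewrite size_rcons (IH _ h1).
Qed.

Lemma AA_mem n (j : 'I_n) t N (v : nat -> 'I_n) :
  (forall s, (t <= s < N)%N -> v s != j) -> [seq v s | s <- iota 0 N] \in AA j t N.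
Proof.
elim: N => [|N IH] h; first by rewrite inE.
rewrite -addn1 iotaD map_cat cats1.
rewrite add0n addn1 [AA _ _ _.+1]/=.
apply: (allpairs_f rcons); first by apply: IH => s hs; apply: h; lia.
case: ifP => hN; first by rewrite mem_enum.
move/negbT: hN; rewrite -leqNgt => hN; rewrite mem_enum inE; apply: h; lia.
Qed.

Lemma sum_cst_seq (V : nmodType) I (r : seq I) (c : V) : \sum_(i <- r) c = c *+ size r.
Proof. by elim: r => [|i r IH]; rewrite ?big_nil ?big_cons ?IH ?mulrS. Qed.

Section Prob.
Variables (R : realType) (d : measure_display) (Om : measurableType d) (P : probability Om R).
Variables (n : nat) (ro : 'I_n -> role) (B : 'I_n -> Om -> bool) (U : nat -> Om -> 'I_n).
Hypothesis hmeas : forall b s, measurable (cyl ro B U b s).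
Let m := #|[pred i | is_fol (ro i)]|.
Hypothesis hP : forall b s, P (cyl ro B U b s) =
     ((2%:R^-1) ^+ m * (n%:R^-1) ^+ size s)%:E.

Lemma sub_bigU (I : Type) (r : seq I) (F : I -> set Om) :
  (forall i, measurable (F i)) ->
  (P (\big[setU/set0]_(i <- r) F i) <= \sum_(i <- r) P (F i))%E.
Proof.
move=> mF; elim: r => [|i r IH]; first by rewrite !big_nil measure0.
rewrite !big_cons; apply: le_trans (measureU2 _ _ _) _ => //.
  exact: bigsetU_measurable.
exact: leeD2l.
Qed.

Definition EE (j : 'I_n) t L : set Om :=
  \big[setU/set0]_(f <- enum {ffun 'I_n -> bool})
    \big[setU/set0]_(s <- AA j t (t + L)) cyl ro B U (fun i => f i) s.

Lemma EE_meas j t L : measurable (EE j t L).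
Proof.
by apply: bigsetU_measurable => f _; apply: bigsetU_measurable => s _; exact: hmeas.
Qed.

Lemma EE_le j t L : (P (EE j t L) <=
  (((2%:R^-1) ^+ m * (n%:R^-1) ^+ (t + L)) *+ (n ^ t * n.-1 ^ L) *+ 2 ^ n)%:E)%E.
Proof.
rewrite /EE; apply: le_trans (sub_bigU _ _) _.
  by move=> f; apply: bigsetU_measurable => s _; exact: hmeas.
apply: le_trans (lee_sum (g := fun _ =>
   ((2%:R^-1 ^+ m * n%:R^-1 ^+ (t + L)) *+ (n ^ t * n.-1 ^ L))%:E) _ _) _.
  move=> f _; apply: le_trans (sub_bigU _ _) _; first by move=> s; exact: hmeas.
  rewrite (eq_big_seq (fun _ => (2%:R^-1 ^+ m * n%:R^-1 ^+ (t + L))%:E)); last first.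
    by move=> s hs; rewrite hP (AA_size hs).
  by rewrite sumEFin sum_cst_seq size_AA.
by rewrite sumEFin sum_cst_seq -cardE card_ffun card_bool card_ord.
Qed.

Lemma ae_visit (j : 'I_n) t : (1 < n)%N ->
  {ae P, forall w, exists s, (t <= s)%N /\ U s w = j}.
Proof.
move=> n1.
pose C : R := 2%:R^-1 ^+ m *+ 2 ^ n.
pose q : R := n%:R^-1 * n.-1%:R.
have hb : forall L, (P (EE j t L) <= (C * q ^+ L)%:E)%E.
  move=> L; apply: le_trans (EE_le j t L) _; rewrite lee_fin le_eqVlt; apply/orP; left; apply/eqP.
  have h1 : n%:R^-1 ^+ t * n%:R ^+ t = 1 :> R.
    by rewrite -exprMn mulVf ?expr1n // pnatr_eq0; lia.
  rewrite /C /q -mulrnA -[_ *+ (_ * 2 ^ n)%N]mulr_natr -[_ *+ 2 ^ n]mulr_natr !natrM !natrX exprD exprMn.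
  transitivity ((2%:R^-1 ^+ m * 2%:R ^+ n * (n%:R^-1 ^+ L * n.-1%:R ^+ L) * (n%:R^-1 ^+ t * n%:R ^+ t)) : R).
    by ring.
  by rewrite h1 mulr1.
exists (\bigcap_L EE j t L); split.
- by apply: bigcapT_measurable => L; exact: EE_meas.
- have hle : forall L, (P (\bigcap_L EE j t L) <= (C * q ^+ L)%:E)%E.
    move=> L; apply: le_trans (hb L); apply: le_measure; rewrite ?inE.
    + by apply: bigcapT_measurable => L'; exact: EE_meas.
    + exact: EE_meas.
    + by move=> w hw; by apply: hw.
  apply/eqP; rewrite eq_le measure_ge0 andbT.
  have fin : P (\bigcap_L EE j t L) \is a fin_num.
    by rewrite ge0_fin_numE // (le_lt_trans (hle 0%N)) // ltey.
  rewrite -(fineK fin) lee_fin.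
  apply: (@cvgr_to_ge _ eventually _ _ (fun L => C * q ^+ L)).
    rewrite -[X in _ --> X](mulr0 C); apply: cvgMl_tmp; apply: cvg_expr.
    have q0 : 0 <= q by rewrite /q mulr_ge0 // invr_ge0.
    rewrite ger0_norm // /q mulrC ltr_pdivrMr ?ltr0n ?mul1r ?ltr_nat; lia.
  by apply: nearW => L; rewrite -lee_fin fineK.
- move=> w /= hw L.
  rewrite /EE -bigcup_seq; exists [ffun i => B i w]; first by rewrite /= mem_enum.
  rewrite -bigcup_seq; exists [seq U s w | s <- iota 0 (t + L)].
    rewrite /=; apply: AA_mem => s hs; apply/eqP => e; apply: hw; exists s; split => //; lia.
  split; first by move=> i _; rewrite ffunE.
  by rewrite size_map size_iota.
Qed.
End Prob.

Local Close Scope classical_set_scope.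

Theorem lemma7 (R : realType) (d : measure_display) (Om : measurableType d)
  (P : probability Om R) (n k : nat) (ro : 'I_n -> role)
  (B : 'I_n -> Om -> bool) (U : nat -> Om -> 'I_n) :
  (2 <= #|[pred i | is_fol (ro i)]|)%N ->
  (#|[pred i | is_con (ro i)]| < k)%N ->
  (k <= n - #|[pred i | is_rej (ro i)]|)%N ->
  (forall b s, measurable (cyl ro B U b s)) ->
  (forall b s, P (cyl ro B U b s) =
     ((2%:R^-1) ^+ #|[pred i | is_fol (ro i)]| * (n%:R^-1) ^+ size s)%:E) ->
  {ae P, forall w,
     (forall t, (ones (traj ro (init ro (fun i => B i w)) (fun t => U t w) t) < k)%N) ->
     followers_zero_at_T ro (traj ro (init ro (fun i => B i w)) (fun t => U t w))}.
Proof.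
move=> h2 hc hk hmeas hP.
have n1 : (1 < n)%N.
  by apply: leq_trans h2 _; rewrite -[X in (_ <= X)%N]card_ord max_card.
have hall : {ae P, forall w, forall (p : nat), forall t, (p < n)%N ->
    exists s, (t <= s)%N /\ (U s w : nat) = p}.
  apply: ae_foralln => p; apply: ae_foralln => t.
  case: (ltnP p n) => hp.
  - apply: filterS (ae_visit hmeas hP (Ordinal hp) t n1) => w [s [hs e]] _.
    by exists s; split => //; rewrite e.
  - by apply: nearW => w; lia.
apply: filterS hall => w hw hnd.
apply: (det_main hnd hk) => i t _.
have [s [hs e]] := hw i t (ltn_ord i); exists s; split => //; exact: val_inj.
Qed.
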